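(* Let $K$ be a field, $A=K[x_1,\dots,x_n]$, and $P=(x_1^{e_1},\dots,x_r^{e_r})$ for some $r\le n$ and integers $2\le e_1\le\cdots\le e_r$. Let $J\subset A$ be a strongly stable ideal and $I\subset A$ a monomial ideal containing $P+J$. Fix variables $a=x_i$, $b=x_k$ with $i<k$. Let $I'$ be the ideal of $A$ generated by all minimal monomial generators of $I$ other than $b^{e_b}$ (where $e_b=e_k$ if $k\le r$; if $k>r$, take $I'=I$). Let $T'$ be the $\{a,b\}$-compression of $I'$ and $T=T'+P$. Then $J\subset T$.
   Context: A monomial ideal $J$ is strongly stable if whenever $x_l m\in J$ for a monomial $m$, then $x_p m\in J$ for all $p<l$. For a monomial ideal $I$ and variables $a=x_i$, $b=x_k$ with $i<k$, write $I=\bigoplus_f fV_f$, where $f$ ranges over monomials in the variables other than $a,b$ and each $V_f$ is a monomial ideal of $K[a,b]$. The $\{a,b\}$-compression of $I$ is $\bigoplus_f fN_f$, where $N_f\subset K[a,b]$ is the lex ideal (with respect to $a>b$) having the same Hilbert function as $V_f$. A lex ideal is a monomial ideal whose degree-$d$ monomials form, for every $d$, an initial lexicographic segment of all degree-$d$ monomials. *)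

(* Defs.v *)
(* Monomial ideals of A = K[x_0,...,x_{n-1}] are represented by
   their sets of monomials (exponent vectors). *)
From mathcomp Require Import all_boot.
From mathcomp Require Import boolp.

Set Implicit Arguments.
Unset Strict Implicit.
Unset Printing Implicit Defensive.

Definition mon (n : nat) := 'I_n -> nat.

Definition dvdm n (m m' : mon n) : Prop := forall j, m j <= m' j.

Definition isMonIdeal n (I : mon n -> Prop) : Prop :=
  forall m m', I m -> dvdm m m' -> I m'.

Definition xpow n (l : 'I_n) (e : nat) : mon n := fun j => if j == l then e else 0.

Definition addvar n (m : mon n) (l : 'I_n) : mon n := fun j => m j + (j == l).

Definition stronglyStable n (J : mon n -> Prop) : Prop :=
  isMonIdeal J /\
  forall (m : mon n) (l p : 'I_n), p < l -> J (addvar m l) -> J (addvar m p).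

(* P = (x_0^{e 0}, ..., x_{r-1}^{e (r-1)})  (0-based indexing) *)
Definition Pideal n (r : nat) (e : nat -> nat) : mon n -> Prop :=
  fun m => exists j : 'I_n, j < r /\ e j <= m j.

Definition mingen n (I : mon n -> Prop) (g : mon n) : Prop :=
  I g /\ forall g', I g' -> dvdm g' g -> dvdm g g'.

Definition Iprime n (I : mon n -> Prop) (b : 'I_n) (r : nat) (e : nat -> nat)
  : mon n -> Prop :=
  if b < r then
    fun m => exists g : mon n,
      [/\ mingen I g, ~ (forall j, g j = xpow b (e b) j) & dvdm g m]
  else I.

(* the monomial f * a^p * b^q, where f ranges over monomials in the other variables
   (the a- and b-exponents of f are overridden) *)
Definition setab n (f : mon n) (a b : 'I_n) (p q : nat) : mon n :=
  fun j => if j == a then p else if j == b then q else f j.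

(* V_f, as a set of monomials a^p b^q of K[a,b] *)
Definition fiber n (I : mon n -> Prop) (a b : 'I_n) (f : mon n) : nat -> nat -> Prop :=
  fun p q => I (setab f a b p q).

(* lex ideal of K[a,b] (a > b): a monomial ideal whose degree-d monomials form
   an initial lex segment for every d *)
Definition isLex2 (N : nat -> nat -> Prop) : Prop :=
  (forall p q p' q', N p q -> p <= p' -> q <= q' -> N p' q') /\
  (forall p q p', N p q -> p <= p' -> p' <= p + q -> N p' (p + q - p')).

Definition hf2 (V : nat -> nat -> Prop) (d : nat) : nat :=
  count (fun j => `[< V j (d - j) >]) (iota 0 d.+1).

Definition isCompression n (a b : 'I_n) (I T : mon n -> Prop) : Prop :=
  forall f : mon n,
    isLex2 (fiber T a b f) /\
    forall d, hf2 (fiber T a b f) d = hf2 (fiber I a b f) d.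

(* Main.v *)
Require Import Defs.
From mathcomp Require Import all_boot.
From mathcomp Require Import boolp.
From mathcomp Require Import zify.
From Stdlib Require Import Classical.

Lemma setab_id n (m : mon n) a b : setab m a b (m a) (m b) = m.
Proof.
apply: funext => j; rewrite /setab.
by case: eqP => [->|_] //; case: eqP => [->|_].
Qed.

Lemma addvar_setab_b n (m : mon n) (a b : 'I_n) p q : a != b ->
  addvar (setab m a b p q) b = setab m a b p q.+1.
Proof.
move=> hab; apply: funext => j; rewrite /addvar /setab.
case: (eqVneq j a) => [->|ja]; first by rewrite (negbTE hab) addn0.
case: (eqVneq j b) => [_|jb]; first by rewrite addn1.
by rewrite addn0.
Qed.

Lemma addvar_setab_a n (m : mon n) (a b : 'I_n) p q :
  addvar (setab m a b p q) a = setab m a b p.+1 q.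
Proof.
apply: funext => j; rewrite /addvar /setab.
case: (eqVneq j a) => [_|ja]; first by rewrite addn1.
by rewrite addn0.
Qed.

Lemma stab_shift n (J : mon n -> Prop) (m : mon n) (a b : 'I_n) p q :
  stronglyStable J -> a < b -> J (setab m a b p q) ->
  forall t, t <= q -> J (setab m a b (p + t) (q - t)).
Proof.
move=> [_ hS] hab hJ; elim=> [|t IH] ht; first by rewrite addn0 subn0.
have hab' : a != b by rewrite neq_ltn hab.
have := IH (ltnW ht).
have -> : q - t = (q - t.+1).+1 by lia.
rewrite -addvar_setab_b // => H.
have := hS _ _ _ hab H.
by rewrite addvar_setab_a addnS.
Qed.

Lemma exists_mingen n (I : mon n -> Prop) (m : mon n) :
  I m -> exists g, mingen I g /\ dvdm g m.
Proof.
suff H : forall N (m : mon n), \sum_j m j < N -> I m ->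
  exists g, mingen I g /\ dvdm g m by apply: (H _ m (ltnSn _)).
elim=> [|N IH] {}m // Hs Im.
case: (classic (mingen I m)) => Hm.
  by exists m; split => // j.
have [g' Hg'] : exists g', ~ (I g' -> dvdm g' m -> dvdm m g').
  apply: not_all_ex_not => H; apply: Hm; split => //.
have [Ig' [dg' ndg']] : I g' /\ dvdm g' m /\ ~ dvdm m g'.
  by case: (imply_to_and _ _ Hg') => h1 h2; case: (imply_to_and _ _ h2).
have [j hj] : exists j, ~ m j <= g' j by apply: not_all_ex_not.
have hlt : \sum_i g' i < \sum_i m i.
  rewrite (bigD1 j) //= [X in _ < X](bigD1 j) //=.
  have : \sum_(i | i != j) g' i <= \sum_(i | i != j) m i by apply: leq_sum.
  move/negP: hj; rewrite -ltnNge; move=> h1 h2; rewrite -addSn; exact: leq_add h1 h2.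
have [g [hg dg]] := IH g' (leq_trans hlt Hs) Ig'.
by exists g; split => // i; apply: leq_trans (dg i) (dg' i).
Qed.

Theorem mainTheorem4 (n r : nat) (e : nat -> nat) (J I T' : mon n -> Prop)
    (a b : 'I_n) :
  r <= n ->
  (forall j, j < r -> 2 <= e j) ->
  (forall j1 j2, j1 <= j2 -> j2 < r -> e j1 <= e j2) ->
  stronglyStable J ->
  isMonIdeal I ->
  (forall m, Pideal r e m \/ J m -> I m) ->
  a < b ->
  isCompression a b (Iprime I b r e) T' ->
  forall m : mon n, J m -> (T' m \/ Pideal r e m).
Proof.
move=> _ _ _ hJ hI hPJ hab hC m Jm.
case: (classic (Pideal r e m)) => hP; [by right | left].
have hab' : a != b by rewrite neq_ltn hab.
set p := m a; set q := m b; set d := p + q.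
have hI' : forall j, p <= j <= d -> fiber (Iprime I b r e) a b m j (d - j).
  move=> j /andP [h1 h2].
  have := @stab_shift _ J m a b p q hJ hab; rewrite setab_id => /(_ Jm (j - p)).
  have -> : p + (j - p) = j by lia.
  have -> : q - (j - p) = d - j by rewrite /d; lia.
  move=> /(_ ltac:(rewrite /d in h2; lia)) Jj.
  have Ij : I (setab m a b j (d - j)) by apply: hPJ; right.
  rewrite /fiber /Iprime; case: ifP => hbr //.
  have [g [hg dg]] := exists_mingen _ _ _ Ij.
  exists g; split => // Hg.
  have := dg b; rewrite Hg /xpow eqxx /setab eq_sym (negbTE hab') eqxx.
  have hqb : q < e b.
    rewrite ltnNge; apply/negP => hle; apply: hP; by exists b; split.
  rewrite /d in hqb *; lia.
have [hlex hhf] := hC m.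
have hcount1 : q.+1 <= hf2 (fiber (Iprime I b r e) a b m) d.
  rewrite /hf2 (_ : d.+1 = p + q.+1); last by rewrite /d addnS.
  rewrite iotaD count_cat add0n.
  rewrite (@eq_in_count _ _ predT (iota p q.+1)); last first.
    move=> j; rewrite mem_iota => hj /=; apply: asboolT; apply: hI'.
    by rewrite /d; lia.
  by rewrite count_predT size_iota leq_addl.
rewrite -hhf in hcount1.
apply: NNPP => hnT.
have hnV : forall j, j <= p -> ~ fiber T' a b m j (d - j).
  move=> j hj hV.
  have := (proj2 hlex) _ _ p hV hj ltac:(rewrite /d; lia).
  have -> : j + (d - j) - p = q by rewrite /d; lia.
  by rewrite /fiber setab_id.
move: hcount1; rewrite /hf2 (_ : d.+1 = p.+1 + q); last by rewrite /d addSn.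
rewrite iotaD count_cat add0n.
rewrite (@eq_in_count _ _ pred0 (iota 0 p.+1)); last first.
  move=> j; rewrite mem_iota => hj /=; apply: asboolF; apply: hnV; lia.
rewrite count_pred0 add0n => h.
have := count_size (fun j => `[< fiber T' a b m j (d - j) >]) (iota p.+1 q).
rewrite size_iota; lia.
Qed.
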